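(* Let $\mathbb{D}=\{z\in\mathbb{C}:|z|<1\}$ and let $z_1,z_2\in\mathbb{D}\setminus\{0\}$ be distinct. Let $z',z''$ be the two intersection points of the perpendicular bisector of the segment $[z_1,z_2]$ with the unit circle, namely \[ \{z',z''\}=\left\{\frac{z_1-z_2}{|z_1-z_2|}\left(\frac{|z_1|^2-|z_2|^2}{2|z_1-z_2|}\pm i\sqrt{1-\Big(\frac{|z_1|^2-|z_2|^2}{2|z_1-z_2|}\Big)^2}\right)\right\}. \] Then \[ b_{\mathbb{D},\infty}(z_1,z_2)=\begin{cases}\dfrac{|z_1-z_2|}{1-\min\{|z_1|,|z_2|\}}, & \text{if } |z_1|\le 1-\Big|z_2-\frac{z_1}{|z_1|}\Big| \text{ or } |z_2|\le 1-\Big|z_1-\frac{z_2}{|z_2|}\Big|,\\[2mm] \dfrac{|z_1-z_2|}{\min\{|z'-z_1|,|z''-z_1|\}}, & \text{otherwise}.\end{cases} \]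
   Context: For $z_1,z_2\in\mathbb{D}$, $b_{\mathbb{D},\infty}(z_1,z_2)=\sup_{w\in\partial\mathbb{D}}\frac{|z_1-z_2|}{\max\{|z_1-w|,|z_2-w|\}}$. *)

(* Defs.v *)
From Stdlib Require Import Reals.
From Coquelicot Require Export Coquelicot.
Open Scope R_scope.

Definition in_disk (z : C) : Prop := Cmod z < 1.

(* The supremum is taken with Coquelicot's least upper bound in Rbar; the set
   is nonempty and bounded above (for z1,z2 in D), so it is finite. *)
Definition b_D_inf (z1 z2 : C) : R :=
  real (Lub_Rbar (fun r : R => exists w : C, Cmod w = 1 /\
          r = Cmod (z1 - z2)%C / Rmax (Cmod (z1 - w)%C) (Cmod (z2 - w)%C))).

Definition bis_t (z1 z2 : C) : R :=
  (Cmod z1 ^ 2 - Cmod z2 ^ 2) / (2 * Cmod (z1 - z2)%C).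

Definition z_prime (z1 z2 : C) : C :=
  ((z1 - z2) / RtoC (Cmod (z1 - z2)) *
   (RtoC (bis_t z1 z2) + Ci * RtoC (sqrt (1 - bis_t z1 z2 ^ 2))))%C.

Definition z_second (z1 z2 : C) : C :=
  ((z1 - z2) / RtoC (Cmod (z1 - z2)) *
   (RtoC (bis_t z1 z2) - Ci * RtoC (sqrt (1 - bis_t z1 z2 ^ 2))))%C.

(* Main.v *)
Require Import Defs.
From Stdlib Require Import Reals Lra Psatz.
From Coquelicot Require Import Coquelicot.
Open Scope R_scope.
Lemma lub_char (z1 z2 : C) (M : R) : M > 0 ->
  (forall w : C, Cmod w = 1 -> M <= Rmax (Cmod (z1 - w)%C) (Cmod (z2 - w)%C)) ->
  (exists w : C, Cmod w = 1 /\ Rmax (Cmod (z1 - w)%C) (Cmod (z2 - w)%C) = M) ->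
  b_D_inf z1 z2 = Cmod (z1 - z2)%C / M.
Proof.
  intros HM Hlb [w0 [Hw0 Hf0]].
  unfold b_D_inf.
  rewrite (is_lub_Rbar_unique _ (Finite (Cmod (z1 - z2)%C / M))); [reflexivity|].
  split.
  - intros x [w [Hw ->]]. simpl. unfold Rdiv. apply Rmult_le_compat_l.
    apply Cmod_ge_0. apply Rinv_le_contravar; auto.
  - intros b Hb. apply Hb. exists w0. split; auto. rewrite Hf0; reflexivity.
Qed.
Lemma key1 (A B a c t s : R) : A^2+B^2=1 -> a^2+c^2=1 -> 0 <= s -> s^2 = 1 - t^2 ->
  a <= t -> t < A -> A*a + B*c <= t*A + s*Rabs B.
Proof.
  intros HP HW Hs Hs2 Hat HtA.
  set (l := (t-a)/(A-a)).
  assert (Hl : l*(A-a) = t-a) by (unfold l; field; lra). clearbody l.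
  assert (Hl0 : 0 <= l) by nra.
  assert (Hl1 : l < 1) by nra.
  assert (Hdot : A*a + B*c <= 1) by (pose proof (pow2_ge_0 (A-a)); pose proof (pow2_ge_0 (B-c)); nra).
  set (X := (1-l)*c + l*B). assert (HXd : X = (1-l)*c + l*B) by reflexivity. clearbody X.
  assert (Ht : t = (1-l)*a + l*A) by lra.
  assert (HXn : t^2 + X^2 = (1-l)^2 + l^2 + 2*l*(1-l)*(A*a+B*c)).
  { rewrite HXd, Ht. ring_simplify. nra. }
  assert (HX2 : X^2 <= s^2). { assert (0 <= l*(1-l)) by nra. assert (l*(1-l)*(A*a+B*c) <= l*(1-l)) by nra. nra. }
  assert (HBX : B*X <= s*Rabs B).
  { assert (HaX : Rabs X <= s).
    { destruct (Rle_dec (Rabs X) s) as [h|h]; auto. exfalso.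
      assert (Rabs X ^2 = X^2) by (rewrite <- !Rsqr_pow2; symmetry; apply Rsqr_abs).
      nra. }
    destruct (Rle_dec 0 B).
    - rewrite Rabs_right by lra. pose proof (Rle_abs X). nra.
    - rewrite Rabs_left by lra. pose proof (Rle_abs (-X)). rewrite Rabs_Ropp in H. nra. }
  assert (Heq : t*A + B*X = (1-l)*(A*a+B*c) + l) by (rewrite Ht; nra).
  nra.
Qed.

Lemma key (A B a c t s r : R) : A^2+B^2=r^2 -> 0 < r -> a^2+c^2=1 -> 0 <= s -> s^2 = 1 - t^2 ->
  a <= t -> t*r < A -> A*a + B*c <= t*A + s*Rabs B.
Proof.
  intros HP Hr HW Hs Hs2 Hat HtA.
  pose proof (key1 (A/r) (B/r) a c t s) as K.
  assert (E1 : (A/r)^2 + (B/r)^2 = 1) by (field_simplify; [rewrite HP; field|]; lra).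
  assert (E2 : t < A/r) by (apply (Rmult_lt_reg_r r); [lra|]; field_simplify; lra).
  specialize (K E1 HW Hs Hs2 Hat E2).
  replace (Rabs (B/r)) with (Rabs B / r) in K by (unfold Rdiv; rewrite Rabs_mult, Rabs_inv, (Rabs_right r) by lra; reflexivity). 
  apply (Rmult_le_compat_r r) in K; [|lra].
  field_simplify in K; try lra.
Qed.

Lemma case2_real (x1 y1 x2 y2 r1 r2 d u1 u2 t s w1 w2 : R) :
  0 < r1 -> r1^2 = x1^2+y1^2 -> 0 < r2 -> r2^2 = x2^2+y2^2 -> 0 < d ->
  x1-x2 = d*u1 -> y1-y2 = d*u2 -> u1^2+u2^2 = 1 -> 2*d*t = r1^2-r2^2 ->
  0 <= s -> s^2 = 1-t^2 -> t*r1 < u1*x1+u2*y1 -> u1*x2+u2*y2 < t*r2 ->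
  w1^2+w2^2 = 1 ->
  Rmin ((x1-(u1*t - u2*s))^2+(y1-(u1*s + u2*t))^2) ((x1-(u1*t + u2*s))^2+(y1-(-u1*s + u2*t))^2)
    <= (x1-w1)^2+(y1-w2)^2 \/
  Rmin ((x1-(u1*t - u2*s))^2+(y1-(u1*s + u2*t))^2) ((x1-(u1*t + u2*s))^2+(y1-(-u1*s + u2*t))^2)
    <= (x2-w1)^2+(y2-w2)^2.
Proof.
  intros Hr1 Er1 Hr2 Er2 Hd Eu1 Eu2 Eu Et Hs Es C1 C2 Ew.
  assert (Ee : (u1*t - u2*s)^2 + (u1*s+u2*t)^2 = 1).
  { replace ((u1*t - u2*s)^2 + (u1*s+u2*t)^2) with ((u1^2+u2^2)*(s^2+t^2)) by ring.
    rewrite Eu, Es. ring. }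
  assert (Ef : (u1*t + u2*s)^2 + (-u1*s+u2*t)^2 = 1).
  { replace ((u1*t + u2*s)^2 + (-u1*s+u2*t)^2) with ((u1^2+u2^2)*(s^2+t^2)) by ring.
    rewrite Eu, Es. ring. }
  set (a := u1*w1+u2*w2). set (c := u1*w2-u2*w1).
  assert (Ea : a^2+c^2 = 1).
  { unfold a, c. replace ((u1*w1+u2*w2)^2+(u1*w2-u2*w1)^2) with ((u1^2+u2^2)*(w1^2+w2^2)) by ring.
    rewrite Eu, Ew. ring. }
  destruct (Rle_dec a t) as [Hat|Hat].
  - left.
    pose proof (key (u1*x1+u2*y1) (u1*y1-u2*x1) a c t s r1) as K.
    assert (E1 : (u1*x1+u2*y1)^2 + (u1*y1-u2*x1)^2 = r1^2).
    { replace ((u1*x1+u2*y1)^2 + (u1*y1-u2*x1)^2) with ((u1^2+u2^2)*(x1^2+y1^2)) by ring.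
      rewrite Eu, Er1. ring. }
    specialize (K E1 Hr1 Ea Hs Es Hat C1).
    assert (Edot : (u1*x1+u2*y1)*a + (u1*y1-u2*x1)*c = (u1^2+u2^2)*(x1*w1+y1*w2)) by (unfold a, c; ring).
    rewrite Edot, Eu in K.
    unfold Rmin. destruct (Rle_dec _ _);
    destruct (Rle_dec 0 (u1*y1-u2*x1)); [rewrite Rabs_right in K by lra|rewrite Rabs_left in K by lra|rewrite Rabs_right in K by lra|rewrite Rabs_left in K by lra]; nra.
  - right.
    pose proof (key (-(u1*x2+u2*y2)) (-(u1*y2-u2*x2)) (-a) (-c) (-t) s r2) as K.
    assert (E1 : (-(u1*x2+u2*y2))^2 + (-(u1*y2-u2*x2))^2 = r2^2).
    { replace ((-(u1*x2+u2*y2))^2 + (-(u1*y2-u2*x2))^2) with ((u1^2+u2^2)*(x2^2+y2^2)) by ring.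
      rewrite Eu, Er2. ring. }
    assert (Ea' : (-a)^2+(-c)^2 = 1) by (rewrite <- Ea; ring).
    assert (Es' : s^2 = 1 - (-t)^2) by (rewrite Es; ring).
    specialize (K E1 Hr2 Ea' Hs Es' ltac:(lra) ltac:(lra)).
    assert (Edot : (-(u1*x2+u2*y2))*(-a) + (-(u1*y2-u2*x2))*(-c) = (u1^2+u2^2)*(x2*w1+y2*w2)) by (unfold a, c; ring).
    rewrite Edot, Eu, Rabs_Ropp in K.
    assert (Q1 : (x1-(u1*t - u2*s))^2+(y1-(u1*s + u2*t))^2 = (x2-(u1*t - u2*s))^2+(y2-(u1*s + u2*t))^2).
    { assert (x1 = x2 + d*u1) by lra. assert (y1 = y2 + d*u2) by lra.
      subst x1 y1. nra. }
    assert (Q2 : (x1-(u1*t + u2*s))^2+(y1-(-u1*s + u2*t))^2 = (x2-(u1*t + u2*s))^2+(y2-(-u1*s + u2*t))^2).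
    { assert (x1 = x2 + d*u1) by lra. assert (y1 = y2 + d*u2) by lra.
      subst x1 y1. nra. }
    rewrite Q1, Q2.
    unfold Rmin. destruct (Rle_dec _ _);
    destruct (Rle_dec 0 (u1*y2-u2*x2)); [rewrite Rabs_right in K by lra|rewrite Rabs_left in K by lra|rewrite Rabs_right in K by lra|rewrite Rabs_left in K by lra]; nra.
Qed.

Lemma Cmod_sub_sym (a b : C) : Cmod (a - b)%C = Cmod (b - a)%C.
Proof. replace (b - a)%C with (- (a - b))%C by ring. now rewrite Cmod_opp. Qed.

Lemma low1 (z w : C) : Cmod w = 1 -> 1 - Cmod z <= Cmod (z - w)%C.
Proof.
  intros Hw. pose proof (Cmod_triangle (w - z)%C z) as H.
  replace (w - z + z)%C with w in H by ring. rewrite Cmod_sub_sym. lra.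
Qed.

Lemma lowb (z1 z2 w : C) : Cmod w = 1 ->
  1 - Rmin (Cmod z1) (Cmod z2) <= Rmax (Cmod (z1 - w)%C) (Cmod (z2 - w)%C).
Proof.
  intros Hw. pose proof (low1 z1 w Hw). pose proof (low1 z2 w Hw).
  unfold Rmin, Rmax. destruct (Rle_dec _ _); destruct (Rle_dec _ _); lra.
Qed.

Lemma att1 (z1 z2 : C) : z1 <> 0%C -> Cmod z1 < 1 ->
  Cmod z1 <= 1 - Cmod (z2 - z1 / RtoC (Cmod z1))%C ->
  exists w : C, Cmod w = 1 /\
    Rmax (Cmod (z1 - w)%C) (Cmod (z2 - w)%C) = 1 - Rmin (Cmod z1) (Cmod z2).
Proof.
  intros Hz Hr Hc. pose proof (proj1 (Cmod_gt_0 z1) Hz) as Hp.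
  assert (HR : RtoC (Cmod z1) <> 0%C).
  { intro H. apply (f_equal fst) in H. simpl in H. lra. }
  set (w := (z1 / RtoC (Cmod z1))%C) in *.
  assert (Hw : Cmod w = 1).
  { unfold w. rewrite Cmod_div by auto. rewrite Cmod_R, Rabs_right by lra. field. lra. }
  assert (Hzw : (z1 - w)%C = (w * RtoC (Cmod z1 - 1))%C).
  { unfold w. rewrite RtoC_minus. field. auto. }
  assert (H1 : Cmod (z1 - w)%C = 1 - Cmod z1).
  { rewrite Hzw, Cmod_mult, Hw, Cmod_R, Rabs_left1 by lra. ring. }
  exists w. split; auto.
  pose proof (Cmod_triangle (w - z2)%C z2) as H.
  replace (w - z2 + z2)%C with w in H by ring. rewrite Cmod_sub_sym in H.
  unfold Rmin, Rmax. rewrite H1. destruct (Rle_dec _ _); destruct (Rle_dec _ _); lra.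
Qed.
Lemma cond_real (x1 y1 x2 y2 r1 d u1 u2 t : R) : 0 < r1 -> r1^2 = x1^2+y1^2 -> 0 < d ->
  x1-x2 = d*u1 -> y1-y2 = d*u2 -> 2*d*t = r1^2 - (x2^2+y2^2) ->
  (1-r1)^2 < (x2 - x1/r1)^2 + (y2-y1/r1)^2 -> t*r1 < u1*x1 + u2*y1.
Proof.
  intros Hr Er Hd E1 E2 Et H.
  assert (H' : (1-r1)^2 * r1^2 < (r1*x2 - x1)^2 + (r1*y2 - y1)^2).
  { replace ((r1*x2 - x1)^2 + (r1*y2 - y1)^2) with (((x2 - x1/r1)^2 + (y2-y1/r1)^2)*r1^2) by (field; lra).
    apply Rmult_lt_compat_r; nra. }
  assert (H2 : 2*(r1^2 - (x1*x2+y1*y2)) > r1*(r1^2 - (x2^2+y2^2))) by nra.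
  apply (Rmult_lt_reg_l (2*d)); [lra|].
  replace (2*d*(t*r1)) with ((2*d*t)*r1) by ring. rewrite Et.
  replace (2*d*(u1*x1+u2*y1)) with (2*((d*u1)*x1 + (d*u2)*y1)) by ring.
  rewrite <- E1, <- E2. nra.
Qed.

Lemma equi (x1 y1 x2 y2 d u1 u2 t e1 e2 : R) :
  2*d*t = (x1^2+y1^2) - (x2^2+y2^2) -> x1-x2 = d*u1 -> y1-y2 = d*u2 -> u1*e1+u2*e2 = t ->
  (x1-e1)^2+(y1-e2)^2 = (x2-e1)^2+(y2-e2)^2.
Proof.
  intros Et E1 E2 Ee.
  assert (x1 = x2 + d*u1) by lra. assert (y1 = y2 + d*u2) by lra. subst x1 y1.
  assert (2*d*(u1*e1+u2*e2) = 2*d*t) by (rewrite Ee; ring). nra.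
Qed.

Lemma sqrt_Rmin a b : Rmin (sqrt a) (sqrt b) = sqrt (Rmin a b).
Proof.
  unfold Rmin. destruct (Rle_dec a b); destruct (Rle_dec (sqrt a) (sqrt b)); auto.
  - exfalso. pose proof (sqrt_le_1_alt a b r). lra.
  - apply Rle_antisym; [lra|apply sqrt_le_1_alt; lra].
Qed.

Lemma Cdiv_R (x y r : R) : r <> 0 -> ((x,y) / RtoC r)%C = (x/r, y/r).
Proof. intros. apply injective_projections; simpl; field; auto. Qed.

Lemma Cmod2 (x y : R) : Cmod (x,y) ^ 2 = x^2+y^2.
Proof. unfold Cmod; simpl. apply pow2_sqrt. nra. Qed.

Lemma Cminus_pair (a b c e : R) : ((a,b) - (c,e))%C = (a-c, b-e).
Proof. reflexivity. Qed.

Lemma Cmod_pair (a b : R) : Cmod (a,b) = sqrt (a^2+b^2).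
Proof. reflexivity. Qed.

Theorem theorem3p29 (z1 z2 : C) :
  in_disk z1 -> in_disk z2 -> z1 <> 0%C -> z2 <> 0%C -> z1 <> z2 ->
  let cond :=
    Cmod z1 <= 1 - Cmod (z2 - z1 / RtoC (Cmod z1))%C \/
    Cmod z2 <= 1 - Cmod (z1 - z2 / RtoC (Cmod z2))%C in
  (cond -> b_D_inf z1 z2 = Cmod (z1 - z2)%C / (1 - Rmin (Cmod z1) (Cmod z2))) /\
  (~ cond -> b_D_inf z1 z2 =
     Cmod (z1 - z2)%C /
       Rmin (Cmod (z_prime z1 z2 - z1)%C) (Cmod (z_second z1 z2 - z1)%C)).
Proof.
  intros Hd1 Hd2 Hz1 Hz2 Hne cond. unfold cond; clear cond. unfold in_disk in *.
  split.
  - intros Hc. apply lub_char.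
    + pose proof (Rmin_l (Cmod z1) (Cmod z2)). lra.
    + intros w Hw; apply lowb; auto.
    + destruct Hc as [H|H].
      * apply att1; auto.
      * destruct (att1 z2 z1 Hz2 Hd2 H) as [w [Hw Hm]]. exists w.
        rewrite Rmax_comm, Rmin_comm. auto.
  - intros Hnc.
    assert (N1 : ~ Cmod z1 <= 1 - Cmod (z2 - z1 / RtoC (Cmod z1))%C) by (intro; apply Hnc; left; auto).
    assert (N2 : ~ Cmod z2 <= 1 - Cmod (z1 - z2 / RtoC (Cmod z2))%C) by (intro; apply Hnc; right; auto).
    clear Hnc.
    assert (Hr1 : 0 < Cmod z1) by (apply Cmod_gt_0; auto).
    assert (Hr2 : 0 < Cmod z2) by (apply Cmod_gt_0; auto).
    assert (Hd : 0 < Cmod (z1 - z2)%C).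
    { apply Cmod_gt_0. intro H. apply Hne.
      replace z1 with ((z1 - z2) + z2)%C by ring. rewrite H. ring. }
    destruct z1 as [x1 y1], z2 as [x2 y2].
    assert (Er1 : Cmod (x1,y1) ^2 = x1^2+y1^2) by apply Cmod2.
    assert (Er2 : Cmod (x2,y2) ^2 = x2^2+y2^2) by apply Cmod2.
    assert (Ed : Cmod ((x1,y1) - (x2,y2))%C ^2 = (x1-x2)^2+(y1-y2)^2) by (rewrite Cminus_pair; apply Cmod2).
    unfold z_prime, z_second.
    set (t := bis_t (x1,y1) (x2,y2)).
    assert (Et : 2 * Cmod ((x1,y1) - (x2,y2))%C * t = Cmod (x1,y1) ^2 - Cmod (x2,y2) ^2)
      by (unfold t, bis_t; field; lra).
    set (s := sqrt (1 - t^2)).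
    set (r1 := Cmod (x1,y1)) in *. set (r2 := Cmod (x2,y2)) in *.
    set (d := Cmod ((x1,y1) - (x2,y2))%C) in *.
    set (u1 := (x1-x2)/d). set (u2 := (y1-y2)/d).
    assert (Eu1 : x1-x2 = d*u1) by (unfold u1; field; lra).
    assert (Eu2 : y1-y2 = d*u2) by (unfold u2; field; lra).
    assert (Eu : u1^2+u2^2 = 1).
    { unfold u1, u2. replace (((x1 - x2) / d) ^ 2 + ((y1 - y2) / d) ^ 2) with (((x1-x2)^2+(y1-y2)^2)/d^2) by (field; lra).
      rewrite <- Ed. field. lra. }
    assert (C1 : t*r1 < u1*x1 + u2*y1).
    { apply (cond_real x1 y1 x2 y2 r1 d u1 u2 t); auto; try lra.
      rewrite Cdiv_R in N1 by lra. rewrite Cminus_pair in N1.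
      apply Rnot_le_lt in N1.
      rewrite <- Cmod2. nra. }
    assert (C2 : -t*r2 < -u1*x2 + -u2*y2).
    { apply (cond_real x2 y2 x1 y1 r2 d (-u1) (-u2) (-t)); auto; try lra.
      rewrite Cdiv_R in N2 by lra. rewrite Cminus_pair in N2.
      apply Rnot_le_lt in N2.
      rewrite <- Cmod2. nra. }
    assert (Ht1 : t < 1).
    { assert ((u1*x1+u2*y1)^2 <= r1^2).
      { rewrite Er1. pose proof (pow2_ge_0 (u1*y1-u2*x1)).
        replace (x1^2+y1^2) with ((u1^2+u2^2)*(x1^2+y1^2)) by (rewrite Eu; ring). nra. }
      assert (u1*x1+u2*y1 <= r1) by nra. nra. }
    assert (Ht2 : -1 < t).
    { assert ((u1*x2+u2*y2)^2 <= r2^2).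
      { rewrite Er2. pose proof (pow2_ge_0 (u1*y2-u2*x2)).
        replace (x2^2+y2^2) with ((u1^2+u2^2)*(x2^2+y2^2)) by (rewrite Eu; ring). nra. }
      assert (-(u1*x2+u2*y2) <= r2) by nra. nra. }
    assert (Es : s^2 = 1 - t^2) by (unfold s; apply pow2_sqrt; nra).
    assert (Hs : 0 <= s) by (unfold s; apply sqrt_pos).
    assert (Zp : ((((x1, y1) - (x2, y2)) / RtoC d) * (RtoC t + Ci * RtoC s))%C = (u1*t - u2*s, u1*s + u2*t)).
    { unfold u1, u2. apply injective_projections; simpl; field; lra. }
    assert (Zpp : ((((x1, y1) - (x2, y2)) / RtoC d) * (RtoC t - Ci * RtoC s))%C = (u1*t + u2*s, -u1*s + u2*t)).
    { unfold u1, u2. apply injective_projections; simpl; field; lra. }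
    rewrite Zp, Zpp.
    assert (Ee : (u1*t - u2*s)^2 + (u1*s+u2*t)^2 = 1).
    { replace ((u1*t - u2*s)^2 + (u1*s+u2*t)^2) with ((u1^2+u2^2)*(s^2+t^2)) by ring.
      rewrite Eu, Es. ring. }
    assert (Ef : (u1*t + u2*s)^2 + (-u1*s+u2*t)^2 = 1).
    { replace ((u1*t + u2*s)^2 + (-u1*s+u2*t)^2) with ((u1^2+u2^2)*(s^2+t^2)) by ring.
      rewrite Eu, Es. ring. }
    assert (Et' : 2*d*t = (x1^2+y1^2) - (x2^2+y2^2)) by (rewrite <- Er1, <- Er2; exact Et).
    assert (Qe := equi x1 y1 x2 y2 d u1 u2 t (u1*t - u2*s) (u1*s + u2*t) Et' Eu1 Eu2
      ltac:(replace (u1*(u1*t - u2*s) + u2*(u1*s + u2*t)) with ((u1^2+u2^2)*t) by ring; rewrite Eu; ring)).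
    assert (Qf := equi x1 y1 x2 y2 d u1 u2 t (u1*t + u2*s) (-u1*s + u2*t) Et' Eu1 Eu2
      ltac:(replace (u1*(u1*t + u2*s) + u2*(-u1*s + u2*t)) with ((u1^2+u2^2)*t) by ring; rewrite Eu; ring)).
    assert (Hme : Cmod (u1*t - u2*s, u1*s + u2*t) = 1) by (rewrite Cmod_pair, Ee; apply sqrt_1).
    assert (Hmf : Cmod (u1*t + u2*s, -u1*s + u2*t) = 1) by (rewrite Cmod_pair, Ef; apply sqrt_1).
    rewrite (Cmod_sub_sym (u1*t - u2*s, u1*s + u2*t)), (Cmod_sub_sym (u1*t + u2*s, -u1*s + u2*t)).
    apply lub_char.
    + apply Rmin_glb_lt.
      * pose proof (low1 (x1,y1) _ Hme). fold r1 in H. lra.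
      * pose proof (low1 (x1,y1) _ Hmf). fold r1 in H. lra.
    + intros [w1 w2] Hw.
      assert (Ew : w1^2+w2^2 = 1) by (rewrite <- Cmod2, Hw; ring).
      rewrite !Cminus_pair, !Cmod_pair, sqrt_Rmin.
      destruct (case2_real x1 y1 x2 y2 r1 r2 d u1 u2 t s w1 w2) as [H|H]; auto; try lra.
      * eapply Rle_trans; [apply sqrt_le_1_alt; exact H | apply Rmax_l].
      * eapply Rle_trans; [apply sqrt_le_1_alt; exact H | apply Rmax_r].
    + rewrite !Cminus_pair, !Cmod_pair.
      destruct (Rle_dec (sqrt ((x1 - (u1 * t - u2 * s)) ^ 2 + (y1 - (u1 * s + u2 * t)) ^ 2))
                        (sqrt ((x1 - (u1 * t + u2 * s)) ^ 2 + (y1 - (- u1 * s + u2 * t)) ^ 2))).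
      * exists (u1*t - u2*s, u1*s + u2*t). split; auto.
        rewrite !Cminus_pair, !Cmod_pair. simpl fst; simpl snd.
        rewrite <- Qe, Rmin_left by auto. apply Rmax_left. lra.
      * exists (u1*t + u2*s, -u1*s + u2*t). split; auto.
        rewrite !Cminus_pair, !Cmod_pair.
        rewrite <- Qf, Rmin_right by lra. apply Rmax_left. lra.
Qed.
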